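(* Let $N,K\ge 1$, $\mathcal{L}\in\mathbb{R}^{N\times N}$, $e^{(0)}\in\mathbb{R}^N$, and $C_1,\dots,C_K\in\mathbb{R}^{N\times N}$. Suppose there is a real orthogonal matrix $P$ and real diagonal matrices $\Lambda_1,\dots,\Lambda_K$ with $I_N-C_j\mathcal{L}=P\Lambda_jP^{-1}$ and $\|I_N-C_j\mathcal{L}\|_2\le 1$ for all $j\in[K]$. Define $h:[K]^*\to\mathbb{R}$ by $h(S)=\|(I_N-C_{S_{|S|}}\mathcal{L})\cdots(I_N-C_{S_1}\mathcal{L})e^{(0)}\|_2^2$ (with $h(\emptyset)=\|e^{(0)}\|_2^2$). Then $h$ is sequence supermodular: for all $S,S'\in[K]^*$ with $S\preceq S'$ and all $\omega\in[K]$, $$h(S)-h(S\oplus\omega)\ge h(S')-h(S'\oplus\omega).$$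
   Context: $[K]=\{1,\dots,K\}$; $[K]^*$ is the set of all finite sequences (including the empty sequence) with entries in $[K]$. $S\oplus S'$ denotes concatenation and $S\oplus\omega=S\oplus(\omega)$. $S\preceq S'$ ($S$ is a prefix of $S'$) means $S'=S\oplus L$ for some $L\in[K]^*$. $\|\cdot\|_2$ on matrices is the operator (spectral) norm. *)

(* Defs.v *)
From HB Require Import structures.
From mathcomp Require Import all_boot all_order all_algebra.
From mathcomp Require Import all_classical all_reals.
Set Implicit Arguments. Unset Strict Implicit. Unset Printing Implicit Defensive.
Import Order.TTheory GRing.Theory Num.Theory.
Local Open Scope ring_scope.
Local Open Scope classical_set_scope.

Definition vnorm (R : realType) (n : nat) (x : 'cV[R]_n) : R :=
  Num.sqrt (\sum_(i < n) x i 0 ^+ 2).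

Definition opnorm2 (R : realType) (n : nat) (A : 'M[R]_n) : R :=
  sup [set vnorm (A *m x) | x in [set x : 'cV[R]_n | vnorm x <= 1]].

Definition iterM (R : realType) (N K : nat) (L : 'M[R]_N)
  (C : 'I_K -> 'M[R]_N) (j : 'I_K) : 'M[R]_N := 1%:M - C j *m L.

(* (I - C_{S_|S|} L) ... (I - C_{S_1} L) e0 : apply S_1 first. *)
Definition errvec (R : realType) (N K : nat) (L : 'M[R]_N)
  (C : 'I_K -> 'M[R]_N) (e0 : 'cV[R]_N) (S : seq 'I_K) : 'cV[R]_N :=
  foldl (fun v j => iterM L C j *m v) e0 S.

Definition hfun (R : realType) (N K : nat) (L : 'M[R]_N)
  (C : 'I_K -> 'M[R]_N) (e0 : 'cV[R]_N) (S : seq 'I_K) : R :=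
  vnorm (errvec L C e0 S) ^+ 2.

Definition seq_prefix (T : Type) (S S' : seq T) : Prop :=
  exists Lt : seq T, S' = S ++ Lt.

(* Main.v *)
Require Import Defs.
From HB Require Import structures.
From mathcomp Require Import all_boot all_order all_algebra.
From mathcomp Require Import all_classical all_reals.
From mathcomp Require Import lra.
Import Order.TTheory GRing.Theory Num.Theory.
Local Open Scope ring_scope.
Set Implicit Arguments. Unset Strict Implicit.

Section H.
Variable R : realType.
Variable N : nat.

Definition ssq (x : 'cV[R]_N) : R := \sum_(i < N) x i 0 ^+ 2.

Lemma ssq_ge0 x : 0 <= ssq x.
Proof. by apply: sumr_ge0 => i _; exact: sqr_ge0. Qed.

Lemma vnorm_sq x : vnorm x ^+ 2 = ssq x.
Proof. by rewrite /vnorm sqr_sqrtr // ssq_ge0. Qed.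

Lemma ssq_tr x : ssq x = (x^T *m x) 0 0.
Proof. by rewrite /ssq !mxE; apply: eq_bigr => i _; rewrite !mxE expr2. Qed.

Lemma ssq_orth (Q : 'M[R]_N) x : Q^T *m Q = 1%:M -> ssq (Q *m x) = ssq x.
Proof.
by move=> hQ; rewrite !ssq_tr trmx_mul mulmxA -(mulmxA _ _ Q) hQ mulmx1.
Qed.

Lemma vnorm_orth (Q : 'M[R]_N) x : Q^T *m Q = 1%:M -> vnorm (Q *m x) = vnorm x.
Proof. by move=> hQ; rewrite /vnorm -/(ssq _) ssq_orth. Qed.

Lemma diag_mulE (D : 'M[R]_N) (z : 'cV[R]_N) i :
  is_diag_mx D -> (D *m z) i 0 = D i i * z i 0.
Proof.
move=> /is_diag_mxP hD; rewrite mxE (bigD1 i) //= big1 ?addr0 // => k hk.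
by rewrite hD ?mul0r // eq_sym.
Qed.

Lemma ssq_diag (D : 'M[R]_N) z : is_diag_mx D ->
  ssq (D *m z) = \sum_i D i i ^+ 2 * z i 0 ^+ 2.
Proof. by move=> hD; apply: eq_bigr => i _; rewrite diag_mulE // exprMn. Qed.

End H.

Lemma ssq_delta (R : realType) N (i : 'I_N) (f : 'I_N -> R) :
  \sum_(k < N) f k * (delta_mx i 0 : 'cV[R]_N) k 0 ^+ 2 = f i.
Proof.
rewrite (bigD1 i) //= big1 ?addr0; first by rewrite mxE !eqxx expr1n mulr1.
by move=> k hk; rewrite mxE (negbTE hk) /= expr0n mulr0.
Qed.

Lemma eig_bound (R : realType) N (Q D : 'M[R]_N) (i : 'I_N) :
  Q^T *m Q = 1%:M -> Q *m Q^T = 1%:M -> is_diag_mx D ->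
  opnorm2 (Q *m D *m Q^T) <= 1 -> D i i ^+ 2 <= 1.
Proof.
move=> h1 h2 hD hop.
have hQt : Q^T^T *m Q^T = 1%:M by rewrite trmxK.
set E := ([set vnorm (Q *m D *m Q^T *m x) | x in [set x : 'cV[R]_N | vnorm x <= 1]])%classic.
have hE : forall x, vnorm (Q *m D *m Q^T *m x) = vnorm (D *m (Q^T *m x)).
  by move=> x; rewrite -!mulmxA vnorm_orth.
have hub : has_ubound E.
  exists (1 + \sum_k D k k ^+ 2) => _ [x hx <-].
  rewrite hE.
  set z := Q^T *m x.
  have hz : ssq z <= 1.
    rewrite -vnorm_sq /z vnorm_orth //.
    have : 0 <= vnorm x by exact: sqrtr_ge0.
    move: hx => /= hx; nra.
  set B := \sum_k D k k ^+ 2.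
  have hB : 0 <= B by apply: sumr_ge0 => k _; exact: sqr_ge0.
  have hs : vnorm (D *m z) ^+ 2 <= B.
    rewrite vnorm_sq ssq_diag //.
    apply: (@le_trans _ _ (\sum_k B * z k 0 ^+ 2)).
      apply: ler_sum => k _; apply: ler_wpM2r; first exact: sqr_ge0.
      rewrite /B (bigD1 k) //= lerDl; apply: sumr_ge0 => l _; exact: sqr_ge0.
    rewrite -mulr_sumr -[X in _ <= X]mulr1; apply: ler_wpM2l => //.
  have h0 : 0 <= vnorm (D *m z) by exact: sqrtr_ge0.
  nra.
have hin : E `|D i i|.
  exists (Q *m delta_mx i 0).
    rewrite /= vnorm_orth // /vnorm (_ : \sum__ _ = 1) ?sqrtr1 //.
    rewrite -(ssq_delta i (fun _ => 1)); apply: eq_bigr => k _.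
    by rewrite mul1r.
  rewrite hE (mulmxA Q^T) h1 mul1mx /vnorm -/(ssq _) ssq_diag //.
  rewrite (ssq_delta i (fun k => D k k ^+ 2)).
  by rewrite sqrtr_sqr.
have := ub_le_sup hub hin.
move=> /le_trans /(_ hop) hle.
by rewrite -real_normK ?num_real // ; have := normr_ge0 (D i i); nra.
Qed.
Unset Implicit Arguments.

Theorem proposition2 (R : realType) (N K : nat) (hN : (0 < N)%N) (hK : (0 < K)%N)
  (L : 'M[R]_N) (e0 : 'cV[R]_N) (C : 'I_K -> 'M[R]_N)
  (P : 'M[R]_N) (Lam : 'I_K -> 'M[R]_N)
  (hPorth : P^T *m P = 1%:M /\ P *m P^T = 1%:M)
  (hLam : forall j, is_diag_mx (Lam j))
  (hdiag : forall j, 1%:M - C j *m L = P *m Lam j *m invmx P)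
  (hnorm : forall j, opnorm2 (1%:M - C j *m L) <= 1) :
  forall (S S' : seq 'I_K) (w : 'I_K), seq_prefix S S' ->
    hfun L C e0 S - hfun L C e0 (rcons S w)
      >= hfun L C e0 S' - hfun L C e0 (rcons S' w).
Proof.
case: hPorth => h1 h2.
move=> S0 S' w [Ls ->].
have hinv : invmx P = P^T.
  have [_ hu] := mulmx1_unit h1.
  by rewrite -[LHS]mul1mx -h1 -mulmxA mulmxV // mulmx1.
have hA : forall j, Defs.iterM L C j = P *m Lam j *m P^T.
  by move=> j; rewrite /Defs.iterM hdiag hinv.
have heig : forall j i, Lam j i i ^+ 2 <= 1.
  by move=> j i; apply: eig_bound h1 h2 (hLam j) _; rewrite -hinv -hdiag.
pose g := fun (v : 'cV[R]_N) j => Lam j *m v.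
pose v := fun S => foldl g (P^T *m e0) S.
have herr : forall S, errvec L C e0 S = P *m v S.
  move=> S; rewrite /errvec /v.
  have : e0 = P *m (P^T *m e0) by rewrite mulmxA h2 mul1mx.
  elim: S (e0) (P^T *m e0) => [|j S IH] e y he //=.
  apply: IH; rewrite he hA -!mulmxA (mulmxA P^T) h1 mul1mx.
  by [].
have hh : forall S, hfun L C e0 S = \sum_i v S i 0 ^+ 2.
  by move=> S; rewrite /hfun herr vnorm_sq ssq_orth.
have hrc : forall S, v (rcons S w) = Lam w *m v S.
  by move=> S; rewrite /v foldl_rcons.
have hmono : forall S Lt i, v (S ++ Lt) i 0 ^+ 2 <= v S i 0 ^+ 2.
  move=> S Lt i; rewrite /v foldl_cat -/(v S).
  elim: Lt (v S) => [|j Lt IH] z //=.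
  apply: le_trans (IH _) _; rewrite /g diag_mulE // exprMn.
  have := heig j i; have := sqr_ge0 (z i 0); nra.
have hdif : forall S, hfun L C e0 S - hfun L C e0 (rcons S w) =
    \sum_i (1 - Lam w i i ^+ 2) * v S i 0 ^+ 2.
  move=> S; rewrite !hh hrc -sumrB; apply: eq_bigr => i _.
  by rewrite diag_mulE // exprMn mulrBl mul1r.
rewrite !hdif; apply: ler_sum => i _; apply: ler_wpM2l.
  by have := heig w i; lra.
exact: hmono.
Qed.
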